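(* Let $(S,|\cdot|)$ be a finite metric space with $n$ points, $t\ge1$, $G'=(S,E')$ a $t$-spanner for $S$, $f$ an integer with $1\le f\le (n-1)/2$, and $G=(S,E)$ the graph obtained from $G'$ by the construction in the context. Let $F\subseteq E$ be such that $(S,F)$ has maximum degree at most $f$. Then for every edge $\{a,b\}\in E'$ there exists a shortest path between $a$ and $b$ in the graph $G\setminus F$ all of whose vertices belong to $C_{ab}\cup\{a,b\}$.
   Context: All graphs on $S$ have edge weights $|pq|$; path lengths are sums of edge weights. A graph $G'=(S,E')$ is a $t$-spanner for $S$ if its shortest-path distance satisfies $\delta_{G'}(p,q)\le t|pq|$ for all $p,q$. $G\setminus F$ is the graph with vertex set $S$ and edge set $E\setminus F$. Construction: for each edge $\{a,b\}\in E'$, list the points of $S\setminus\{a,b\}$ as $c_1,\dots,c_{n-2}$ in non-decreasing order of $|ac_i|+|c_ib|$ (ties broken arbitrarily) and let $C_{ab}=\{c_1,\dots,c_{2f-1}\}$. The graph $G=(S,E)$ has edge set $E=E'\cup\{\{a,c\},\{c,b\}:\{a,b\}\in E',\ c\in C_{ab}\}$. *)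

(* Defs.v *)
From mathcomp Require Import all_boot all_order all_algebra.
Set Implicit Arguments. Unset Strict Implicit. Unset Printing Implicit Defensive.
Import Order.TTheory GRing.Theory Num.Theory.
Local Open Scope ring_scope.

Section Defs.
Variables (R : realFieldType) (T : finType).

Definition is_metric (d : T -> T -> R) : Prop :=
  [/\ forall x y, 0 <= d x y,
      forall x y, d x y = 0 <-> x = y,
      forall x y, d x y = d y x &
      forall x y z, d x z <= d x y + d y z].

Definition is_graph (Ed : {set {set T}}) : Prop :=
  forall e, e \in Ed -> #|e| = 2%N.

Definition is_path (Ed : {set {set T}}) (x y : T) (s : seq T) : bool :=
  [&& path (fun u v => [set u; v] \in Ed) x s, last x s == y & uniq (x :: s)].

Definition path_len (d : T -> T -> R) (x : T) (s : seq T) : R :=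
  \sum_(uv <- zip (x :: s) s) d uv.1 uv.2.

Definition is_spanner (d : T -> T -> R) (t : R) (Ed : {set {set T}}) : Prop :=
  forall p q, exists s, is_path Ed p q s /\ path_len d p s <= t * d p q.

(* C is a valid choice of the sets C_ab of the construction: for each edge
   {a,b} of E', the points of S \ {a,b} are listed in non-decreasing order of
   |ac|+|cb| (ties broken arbitrarily) and C_ab consists of the first 2f-1. *)
Definition valid_C (d : T -> T -> R) (f : nat) (E' : {set {set T}})
    (C : {set T} -> {set T}) : Prop :=
  forall a b, [set a; b] \in E' ->
    exists s : seq T,
      [/\ perm_eq s (enum (~: [set a; b])),
          sorted (fun x y => d a x + d x b <= d a y + d y b) s &
          C [set a; b] = [set x in take (2 * f - 1) s]].

Definition construct_E (E' : {set {set T}}) (C : {set T} -> {set T}) :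
    {set {set T}} :=
  E' :|: [set e | [exists a, exists b, exists c,
            [&& [set a; b] \in E', c \in C [set a; b] &
                (e == [set a; c]) || (e == [set c; b])]]].

Definition max_deg_le (F : {set {set T}}) (f : nat) : Prop :=
  forall v, (#|[set e in F | v \in e]| <= f)%N.

End Defs.

(* Main.v *)
Require Import Defs.
From mathcomp Require Import all_boot all_order all_algebra.
From mathcomp Require Import zify.
Import Order.TTheory GRing.Theory Num.Theory.
Local Open Scope ring_scope.

Lemma plen_nil (R : realFieldType) (T : finType) (d : T -> T -> R) x :
  path_len d x [::] = 0.
Proof. by rewrite /path_len /= big_nil. Qed.

Lemma plen_cons (R : realFieldType) (T : finType) (d : T -> T -> R) x y s :
  path_len d x (y :: s) = d x y + path_len d y s.
Proof. by rewrite /path_len /= big_cons. Qed.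

Lemma plen_last (R : realFieldType) (T : finType) (d : T -> T -> R) :
  is_metric d -> forall x s, d x (last x s) <= path_len d x s.
Proof.
case=> d0 dxx _ tri x s; elim: s x => [|y s IH] x /=.
  by rewrite plen_nil (proj2 (dxx x x) erefl).
rewrite plen_cons; apply: le_trans (tri x y (last y s)) _.
by rewrite lerD2l.
Qed.

Lemma plen_mid (R : realFieldType) (T : finType) (d : T -> T -> R) :
  is_metric d -> forall x s v, v \in s ->
  d x v + d v (last x s) <= path_len d x s.
Proof.
move=> dm; have [d0 dxx _ tri] := dm.
move=> x s; elim: s x => [|y s IH] x v //=.
rewrite in_cons plen_cons => /orP [/eqP ->|vs].
  by rewrite lerD2l plen_last.
have h := IH y v vs.
apply: le_trans (_ : d x y + (d y v + d v (last y s)) <= _); last by rewrite lerD2l.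
by rewrite addrA lerD2r tri.
Qed.

Fixpoint allseqs (T : finType) (k : nat) : seq (seq T) :=
  match k with
  | 0 => [:: [::]]
  | k'.+1 => [::] :: [seq x :: s | x <- enum T, s <- allseqs T k']
  end.

Lemma allseqsP (T : finType) k (s : seq T) : (size s <= k)%N -> s \in allseqs T k.
Proof.
elim: k s => [|k IH] [|x s] //=.
move=> hs; rewrite in_cons; apply/orP; right.
by apply: (allpairs_f (fun x s => x :: s)); [rewrite mem_enum | exact: IH].
Qed.

Lemma exists_min (R : realFieldType) (X : eqType) (g : X -> R) (l : seq X) :
  l != [::] -> exists2 x, x \in l & forall y, y \in l -> g x <= g y.
Proof.
elim: l => [|y l IH] // _.
have [->|ne] := eqVneq l [::].
  by exists y; rewrite ?inE // => z; rewrite inE => /eqP ->.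
have [m ml hm] := IH ne.
have [le|lt] := leP (g y) (g m).
  exists y; first by rewrite inE eqxx.
  move=> z; rewrite inE => /orP [/eqP ->//|zl]; exact: le_trans le (hm z zl).
exists m; first by rewrite inE ml orbT.
move=> z; rewrite inE => /orP [/eqP ->|zl]; [exact: ltW | exact: hm].
Qed.

Lemma set2_inj (T : finType) (x c c' : T) : [set x; c] = [set x; c'] -> c = c'.
Proof.
move=> h.
have : c \in [set x; c'] by rewrite -h !inE eqxx orbT.
have : c' \in [set x; c] by rewrite h !inE eqxx orbT.
rewrite !inE => /orP [/eqP e1|/eqP e1] /orP [/eqP e2|/eqP e2] //; by subst.
Qed.

Lemma deg_count (T : finType) (F : {set {set T}}) (f : nat) (x y : T) (A : {set T}) :
  max_deg_le F f -> [set x; y] \in F -> x != y ->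
  (#|[set c in A | ([set x; c] \in F) && (c != y)]|.+1 <= f)%N.
Proof.
move=> deg xyF xy.
set B := [set c in A | _].
have inj : injective (fun c : T => [set x; c]) by move=> c c'; apply: set2_inj.
rewrite -(card_imset B inj).
set Fx := [set e in F | x \in e].
have sub : (fun c : T => [set x; c]) @: B \subset Fx :\ [set x; y].
  apply/subsetP => e /imsetP [c]; rewrite !inE => /andP [_ /andP [cF cy]] ->.
  rewrite cF !inE eqxx /= andbT.
  apply/negP => /eqP /set2_inj /eqP; by rewrite (negbTE cy).
have := deg x; rewrite -/Fx (cardsD1 [set x; y] Fx).
have -> : [set x; y] \in Fx by rewrite inE xyF !inE eqxx.
move=> h; apply: leq_trans h; rewrite add1n ltnS; exact: subset_leq_card.
Qed.

Arguments plen_last {R T d}.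
Arguments plen_mid {R T d}.

Theorem lemma4 (R : realFieldType) (T : finType) (d : T -> T -> R)
  (t : R) (E' : {set {set T}}) (f : nat) (C : {set T} -> {set T})
  (F : {set {set T}}) :
  is_metric d ->
  1 <= t ->
  is_graph E' ->
  is_spanner d t E' ->
  (1 <= f)%N -> (2 * f + 1 <= #|T|)%N ->
  valid_C d f E' C ->
  F \subset construct_E E' C ->
  max_deg_le F f ->
  forall a b, [set a; b] \in E' ->
    exists s : seq T,
      [/\ is_path (construct_E E' C :\: F) a b s,
          (forall s' : seq T, is_path (construct_E E' C :\: F) a b s' ->
             path_len d a s <= path_len d a s') &
          all (fun v => v \in C [set a; b] :|: [set a; b]) (a :: s)].
Proof.
move=> dm t1 gE' sp f1 nT vC FE deg a b ab.
set E2 := construct_E E' C :\: F.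
set Cab := C [set a; b].
have [d0 dxx dsym tri] := dm.
have ab_ne : a != b by have := gE' _ ab; rewrite cards2; case: (a != b).
have [s0 [pe so Ceq]] := vC a b ab.
have s0P : forall v, (v \in s0) = (v != a) && (v != b).
  by move=> v; rewrite (perm_mem pe) mem_enum !inE negb_or.
have CP : forall c, c \in Cab -> [/\ c \in s0, c != a & c != b].
  move=> c; rewrite /Cab Ceq inE => /mem_take cs.
  have /andP [h1 h2] : (c != a) && (c != b) by rewrite -s0P.
  by split.
set k := (2 * f - 1)%N.
have sortle : forall c v, c \in Cab -> v \notin Cab -> v != a -> v != b ->
    d a c + d c b <= d a v + d v b.
  move=> c v cC vC' va vb.
  have vs : v \in s0 by rewrite s0P va vb.
  have vd : v \in drop k s0.
    have : v \in take k s0 ++ drop k s0 by rewrite cat_take_drop.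
    rewrite mem_cat => /orP [vt|//].
    by move: vC'; rewrite /Cab Ceq inE vt.
  have ct : c \in take k s0 by move: cC; rewrite /Cab Ceq inE.
  have tr : transitive (fun x y => d a x + d x b <= d a y + d y b).
    by move=> y x z; apply: le_trans.
  have : pairwise (fun x y => d a x + d x b <= d a y + d y b)
      (take k s0 ++ drop k s0) by rewrite cat_take_drop -(sorted_pairwise tr).
  rewrite pairwise_cat.
  by case/and3P => /allrelP h _ _; exact: (h c v ct vd).
have inE2 : forall e, (e \in E2) = (e \notin F) && (e \in construct_E E' C).
  by move=> e; rewrite /E2 inE.
have edgeC : forall c, c \in Cab ->
    ([set a; c] \in construct_E E' C) && ([set c; b] \in construct_E E' C).
  move=> c cC; rewrite /construct_E !inE.
  apply/andP; split; apply/orP; right; apply/existsP; exists a; apply/existsP;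
    exists b; apply/existsP; exists c; by rewrite ab cC !eqxx ?orbT.
set inside := fun v => v \in Cab :|: [set a; b].
have lenb : forall s', is_path E2 a b s' -> d a b <= path_len d a s'.
  move=> s' /and3P [_ /eqP lb _]; have := plen_last dm a s'; by rewrite lb.
have [p0 [p0P p0in p0le]] : exists p0, [/\ is_path E2 a b p0,
    all inside (a :: p0) &
    forall s' v, is_path E2 a b s' -> v \in s' -> v \notin Cab -> v != b ->
      path_len d a p0 <= path_len d a s'].
  case abF : ([set a; b] \in F).
    pose Ba := [set c in Cab | ([set a; c] \in F) && (c != b)].
    pose Bb := [set c in Cab | ([set b; c] \in F) && (c != a)].
    have ca := @deg_count _ F f a b Cab deg abF ab_ne.
    have cb : (#|Bb|.+1 <= f)%N.
      apply: (@deg_count _ F f b a Cab deg); first by rewrite setUC.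
      by rewrite eq_sym.
    have cardC : #|Cab| = k.
      have u : uniq (take k s0).
        by apply: take_uniq; rewrite (perm_uniq pe) enum_uniq.
      rewrite /Cab Ceq cardsE (card_uniqP u) size_takel //. rewrite (perm_size pe) -cardE.
      have := cardsC [set a; b]; rewrite cards2 ab_ne /=.
      rewrite /k => h; move: nT; rewrite -h; lia.
    have : [exists c in Cab, (c \notin Ba) && (c \notin Bb)].
      apply: contraT; rewrite negb_exists_in => /forall_inP hall.
      have sub : Cab \subset Ba :|: Bb.
        apply/subsetP => c cC; have := hall c cC.
        by rewrite negb_and !negbK in_setU.
      have := subset_leq_card sub; have := leq_card_setU Ba Bb.
      move=> [h1 _] h2; rewrite /k cardC in h2; rewrite -/Ba in ca; lia.
    case/exists_inP => c cC cgood.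
    have [cs ca' cb'] := CP c cC.
    move: cgood; rewrite !inE cC ca' cb' /= !andbT => /andP [acF bcF].
    exists [:: c; b]; split.
    have bcF' : [set c; b] \notin F by rewrite setUC.
    - rewrite /is_path /= !inE2 acF bcF'.
      have /andP [-> ->] := edgeC c cC.
      by rewrite /= !inE negb_or eqxx (eq_sym a c) ca' ab_ne cb'.
    - by rewrite /= /inside !inE cC !eqxx !orbT.
    - move=> s' v s'P vs vC' vb.
      have va : v != a.
        apply/negP => /eqP e; move: s'P => /and3P [_ _]; rewrite /= -e vs.
        by [].
      rewrite plen_cons plen_cons plen_nil addr0.
      apply: le_trans (sortle c v cC vC' va vb) _.
      move: s'P => /and3P [_ /eqP lb _].
      by have := plen_mid dm a s' v vs; rewrite lb.
  exists [:: b]; split.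
  - rewrite /is_path /= inE2 abF.
    by rewrite /construct_E !inE ab !eqxx /= andbT.
  - by rewrite /= /inside !inE !eqxx !orbT.
  - move=> s' v s'P _ _ _; rewrite plen_cons plen_nil addr0; exact: lenb.
pose L := [seq s <- allseqs T #|T| | is_path E2 a b s && all inside (a :: s)].
have sizeT : forall s, is_path E2 a b s -> (size s <= #|T|)%N.
  move=> s /and3P [_ _ u]; rewrite cardE.
  apply: leq_trans (uniq_leq_size u _); first by [].
  by move=> x _; rewrite mem_enum.
have p0L : p0 \in L by rewrite mem_filter p0P p0in allseqsP ?sizeT.
have Lne : L != [::] by apply/eqP => e; move: p0L; rewrite e.
have [s sL smin] := @exists_min R _ (path_len d a) L Lne.
move: (sL); rewrite mem_filter => /andP [/andP [sP sin] _].
exists s; split => // s' s'P.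
case: (boolP (all inside (a :: s'))) => [s'in|].
  by apply: smin; rewrite mem_filter s'P s'in allseqsP ?sizeT.
case/allPn => v vin vout.
have va : v != a.
  by apply: contraNneq vout => ->; rewrite /inside !inE eqxx orbT.
have vs : v \in s' by move: vin; rewrite inE (negbTE va).
move: vout; rewrite /inside !inE negb_or negb_or (negbTE va) /= => /andP [vC' vb].
exact: le_trans (smin p0 p0L) (p0le s' v s'P vs vC' vb).
Qed.
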